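(* Let $d,b\ge1$, $M=2^b$, $\varepsilon>0$. Let $P_{U^M}$ be a rotationally symmetric codebook-generating distribution and $f$ an unbiased random encoder satisfying $\varepsilon$-LDP with respect to $P_{U^M}$ (with the selecting decoder). Then there exists a random encoder $f_2$ such that $\mathrm{Err}(f,P_{U^M})\ge\mathrm{Err}(f_2,P_{U^M})$ and $D(v,f_2,P_{U^M})=D(v',f_2,P_{U^M})$ for all $v,v'\in\mathbb{S}^{d-1}$.
   Context: $\mathbb{S}^{d-1}$ is the unit sphere in $\mathbb{R}^d$, $[M]=\{1,\dots,M\}$. The server and user share a random codebook $U^M=(U_1,\dots,U_M)\in(\mathbb{R}^d)^M$ with distribution $P_{U^M}$; the user's random encoder $f:\mathbb{S}^{d-1}\times(\mathbb{R}^d)^M\to[M]$ has transition probabilities $Q_f(m\mid v,u^M)$, and the server decodes message $m$ as $U_m$. The encoder is $\varepsilon$-LDP if $Q_f(m\mid v,u^M)\le e^\varepsilon Q_f(m\mid v',u^M)$ for all $v,v'\in\mathbb{S}^{d-1}$, $m\in[M]$ and $P_{U^M}$-almost all $u^M$; it is unbiased if $\mathbb{E}_{P_{U^M}}[\sum_{m=1}^M U_mQ_f(m\mid v,U^M)]=v$ for all $v\in\mathbb{S}^{d-1}$. Its error at $v$ is $D(v,f,P_{U^M})=\mathbb{E}_{P_{U^M}}[\sum_{m=1}^M\|U_m-v\|_2^2Q_f(m\mid v,U^M)]$, and $\mathrm{Err}(f,P_{U^M})=\sup_{v\in\mathbb{S}^{d-1}}D(v,f,P_{U^M})$. $P_{U^M}$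 is rotationally symmetric if $(U_1,\dots,U_M)$ and $(A_0U_1,\dots,A_0U_M)$ have the same distribution for every $d\times d$ orthogonal matrix $A_0$. *)

(* Defs.v *)
From HB Require Import structures.
From mathcomp Require Import all_boot all_order all_algebra.
From mathcomp Require Import all_classical all_reals all_analysis.
Set Implicit Arguments. Unset Strict Implicit. Unset Printing Implicit Defensive.
Import Order.TTheory GRing.Theory Num.Theory.
Local Open Scope classical_set_scope.
Local Open Scope ring_scope.

(* Both carry the product sigma-algebra (Borel on R),
   which MathComp-Analysis puts on n.-tuple T. *)
Definition codebook (R : realType) (d M : nat) := M.-tuple (d.-tuple R).

Definition sqdist (R : realType) (d : nat) (x y : d.-tuple R) : R :=
  \sum_(j < d) (tnth x j - tnth y j) ^+ 2.

Definition sphere (R : realType) (d : nat) : set (d.-tuple R) :=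
  [set v | \sum_(j < d) tnth v j ^+ 2 = 1].
Arguments sphere : clear implicits.

Definition rot (R : realType) (d : nat) (A : 'M[R]_d) (x : d.-tuple R)
  : d.-tuple R := [tuple \sum_(k < d) A j k * tnth x k | j < d].
Definition rot_cb (R : realType) (d M : nat) (A : 'M[R]_d)
  (u : codebook R d M) : codebook R d M := [tuple rot A (tnth u m) | m < M].

Definition orthogonal (R : realType) (d : nat) (A : 'M[R]_d) : Prop :=
  A *m A^T = 1%:M.

Definition rot_sym (R : realType) (d M : nat)
  (P : probability (codebook R d M) R) : Prop :=
  forall A : 'M[R]_d, orthogonal A ->
  forall S : set (codebook R d M), measurable S ->
    P (rot_cb A @^-1` S) = P S.

(* A random encoder: Q f (m | v, u^M) = Q v u m, a transition probability
   (a probability vector on [M] for every (v,u^M), measurable in u^M). *)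
Definition encoder (R : realType) (d M : nat) :=
  d.-tuple R -> codebook R d M -> 'I_M -> R.

Definition random_encoder (R : realType) (d M : nat) (Q : encoder R d M)
  : Prop :=
  (forall v u m, 0 <= Q v u m) /\
  (forall v u, \sum_(m < M) Q v u m = 1) /\
  (forall v m, measurable_fun setT (fun u => Q v u m)).

Definition ldp (R : realType) (d M : nat) (eps : R)
  (P : probability (codebook R d M) R) (Q : encoder R d M) : Prop :=
  forall v v' m, v \in sphere R d -> v' \in sphere R d ->
    {ae P, forall u, Q v u m <= expR eps * Q v' u m}.

Definition unbiased (R : realType) (d M : nat)
  (P : probability (codebook R d M) R) (Q : encoder R d M) : Prop :=
  forall v, v \in sphere R d -> forall j : 'I_d,
    let g := fun u : codebook R d M =>
      (\sum_(m < M) tnth (tnth u m) j * Q v u m)%:E in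
    P.-integrable setT g /\ (\int[P]_u g u = (tnth v j)%:E)%E.

Definition Dist (R : realType) (d M : nat)
  (Q : encoder R d M) (P : probability (codebook R d M) R)
  (v : d.-tuple R) : \bar R :=
  (\int[P]_u (\sum_(m < M) sqdist (tnth u m) v * Q v u m)%:E)%E.

Definition Err (R : realType) (d M : nat)
  (Q : encoder R d M) (P : probability (codebook R d M) R) : \bar R :=
  ereal_sup [set Dist Q P v | v in sphere R d].

(* Main.v *)
Require Import Defs.
From HB Require Import structures.
From mathcomp Require Import all_boot all_order all_algebra.
From mathcomp Require Import all_classical all_reals all_analysis.
From mathcomp Require Import measurable_realfun.
From mathcomp Require Import ring lra.
Import Order.TTheory GRing.Theory Num.Theory.
Local Open Scope classical_set_scope.
Local Open Scope ring_scope.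
Local Notation rot := Defs.rot.
Local Notation orthogonal := Defs.orthogonal.

Set Implicit Arguments.
Section H.
Variables (R : realType) (d : nat).

Lemma sum_delta (i : 'I_d) (F : 'I_d -> R) :
  \sum_(k < d) (k == i)%:R * F k = F i.
Proof.
rewrite (bigD1 i) //= eqxx mul1r big1 ?addr0 // => k /negbTE ->; by rewrite mul0r.
Qed.

Lemma tnth_rot (A : 'M[R]_d) x j : tnth (rot A x) j = \sum_(k < d) A j k * tnth x k.
Proof. by rewrite tnth_mktuple. Qed.

Lemma rot1 (x : d.-tuple R) : rot 1%:M x = x.
Proof.
apply: eq_from_tnth => i; rewrite tnth_rot -[RHS]sum_delta.
by apply: eq_bigr => k _; rewrite mxE eq_sym.
Qed.

Lemma rot_iso (A : 'M[R]_d) x y : orthogonal A ->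
  sqdist (rot A x) (rot A y) = sqdist x y.
Proof.
move=> oA; have oA' : A^T *m A = 1%:M by apply: mulmx1C.
rewrite /sqdist.
transitivity (\sum_(j < d) \sum_(k < d) \sum_(l < d)
   A j k * A j l * ((tnth x k - tnth y k) * (tnth x l - tnth y l))).
  apply: eq_bigr => j _; rewrite !tnth_rot -sumrB.
  under eq_bigr do rewrite -mulrBr.
  rewrite expr2 mulr_suml; apply: eq_bigr => k _; rewrite mulr_sumr.
  by apply: eq_bigr => l _; rewrite mulrACA.
rewrite exchange_big /=; apply: eq_bigr => k _.
rewrite exchange_big /=.
transitivity (\sum_(l < d) (l == k)%:R * ((tnth x k - tnth y k) * (tnth x l - tnth y l))).
  apply: eq_bigr => l _; rewrite -mulr_suml.
  have := congr1 (fun M : 'M[R]_d => M l k) oA'; rewrite !mxE => <-.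
  by apply: congr2 => //; apply: eq_bigr => j _; rewrite !mxE mulrC.
by rewrite sum_delta expr2.
Qed.

Lemma measurable_rot_cb M (A : 'M[R]_d) :
  measurable_fun setT (@rot_cb R d M A).
Proof.
apply/measurable_fun_tnthP => i.
apply/measurable_fun_tnthP => j.
rewrite /comp /=.
under eq_fun do rewrite tnth_mktuple tnth_rot.
apply: measurable_sum => k.
apply: (measurable_funM (f := fun _ => A j k)) => //.
exact: (measurableT_comp (measurable_tnth k) (measurable_tnth i)).
Qed.


Variable e0 : d.-tuple R.
Definition hw (v : d.-tuple R) k := tnth v k - tnth e0 k.
Definition hs v := \sum_(k < d) hw v k ^+ 2.
Definition HH v : 'M[R]_d := if hs v == 0 then 1%:M else
  \matrix_(i, j) ((i == j)%:R - 2 / hs v * hw v i * hw v j).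

Lemma HH_orth v : orthogonal (HH v).
Proof.
rewrite /orthogonal /HH; case: eqP => [_|/eqP s0].
  by rewrite trmx1 mulmx1.
apply/matrixP => i j; rewrite !mxE.
set c := 2 / hs v.
transitivity (\sum_(k < d) ((k == i)%:R * ((k == j)%:R - c * hw v j * hw v k)
   - c * hw v i * ((k == j)%:R * hw v k) + c ^+ 2 * hw v i * hw v j * hw v k ^+ 2)).
  apply: eq_bigr => k _; rewrite !mxE (eq_sym i k) (eq_sym j k); ring.
rewrite !big_split /= (sum_delta i (fun k => (k == j)%:R - c * hw v j * hw v k)).
rewrite sumrN -mulr_sumr (sum_delta j (fun k => hw v k)) -mulr_sumr -/(hs v) (eq_sym i j).
have -> : c ^+ 2 * hw v i * hw v j * hs v = 2 * c * hw v i * hw v j.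
  rewrite /c; field; exact: s0.
ring.
Qed.

Lemma HH_v v : sphere R d v -> sphere R d e0 -> rot (HH v) v = e0.
Proof.
rewrite /sphere /= => sv se.
rewrite /HH; case: eqP => [s0|/eqP s0].
  rewrite rot1; apply: eq_from_tnth => i.
  have : hw v i ^+ 2 == 0.
    rewrite eq_le sqr_ge0 andbT -s0 /hs (bigD1 i) //= lerDl.
    by apply: sumr_ge0 => k _; exact: sqr_ge0.
  by rewrite sqrf_eq0 subr_eq0 => /eqP.
have hwv : \sum_(k < d) hw v k * tnth v k = hs v / 2.
  have : hs v = 2 * \sum_(k < d) hw v k * tnth v k.
    rewrite /hs mulr_sumr.
    have -> : \sum_(k < d) hw v k ^+ 2 = \sum_(k < d) (2 * (hw v k * tnth v k)
       + (tnth e0 k ^+ 2 - tnth v k ^+ 2)).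
      by apply: eq_bigr => k _; rewrite /hw; ring.
    by rewrite big_split /= sumrB sv se subrr addr0.
  by move=> ->; field.
apply: eq_from_tnth => i; rewrite tnth_rot.
transitivity (\sum_(k < d) ((k == i)%:R * tnth v k - 2 / hs v * hw v i * (hw v k * tnth v k))).
  apply: eq_bigr => k _; rewrite !mxE eq_sym; ring.
rewrite sumrB sum_delta -mulr_sumr hwv /hw; field; exact: s0.
Qed.

End H.
Arguments HH {R d} e0 v.
Arguments HH_orth {R d} e0 v.
Arguments HH_v {R d e0 v}.
Arguments rot_iso {R d A x y}.
Arguments hs {R d} e0 v.
Arguments hw {R d} e0 v k.


Theorem lemma4 (R : realType) (d b : nat) (eps : R)
  (P : probability (codebook R d (2 ^ b)) R) (f : encoder R d (2 ^ b)) :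
  (1 <= d)%N -> (1 <= b)%N -> 0 < eps ->
  rot_sym P -> random_encoder f -> unbiased P f -> ldp eps P f ->
  exists f2 : encoder R d (2 ^ b),
    random_encoder f2 /\
    (Err f2 P <= Err f P)%E /\
    (forall v v', v \in sphere R d -> v' \in sphere R d ->
       Dist f2 P v = Dist f2 P v').
Proof.
move=> d1 _ _ rs [f0 [f1 fm]] _ _.
pose e0 : d.-tuple R := [tuple ((val j == 0%N)%:R : R) | j < d].
have se : sphere R d e0.
  rewrite /sphere /= (bigD1 (Ordinal d1)) //= tnth_mktuple /= expr1n big1 ?addr0 //.
  move=> j /eqP jn; rewrite tnth_mktuple.
  case: eqP => [j0|]; last by rewrite expr0n.
  by exfalso; apply: jn; apply: val_inj.
pose f2 : encoder R d (2 ^ b) := fun v u m => f e0 (rot_cb (HH e0 v) u) m.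
pose g := fun u : codebook R d (2 ^ b) =>
  (\sum_(m < 2 ^ b) sqdist (tnth u m) e0 * f e0 u m)%:E.
have mg : measurable_fun setT g.
  apply/measurable_EFinP; apply: measurable_sum => m.
  apply: (measurable_funM (f := fun u => sqdist (tnth u m) e0) (g := fun u => f e0 u m)); last exact: fm.
  rewrite /sqdist; apply: measurable_sum => j.
  under eq_fun do rewrite expr2.
  have mt : measurable_fun setT (fun u : codebook R d (2 ^ b) => tnth (tnth u m) j - tnth e0 j).
    apply: measurable_funB => //.
    exact: (measurableT_comp (measurable_tnth j) (measurable_tnth m)).
  exact: (measurable_funM mt mt).
have key : forall v, sphere R d v -> Dist f2 P v = Dist f P e0.
  move=> v sv; rewrite /Dist.
  set A := HH e0 v.
  have oA : orthogonal A := HH_orth e0 v.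
  transitivity (\int[P]_(u in rot_cb A @^-1` setT) (g \o rot_cb A) u)%E.
    rewrite preimage_setT; apply: eq_integral => u _ /=; congr EFin.
    apply: eq_bigr => m _; rewrite /f2 -/A tnth_mktuple.
    by rewrite -(HH_v sv se) -/A rot_iso.
  rewrite -ge0_integral_pushforward //; last first.
    by move=> u _; rewrite lee_fin; apply: sumr_ge0 => m _; apply: mulr_ge0;
      [apply: sumr_ge0 => j _; exact: sqr_ge0 | exact: f0].
    exact: measurable_rot_cb.
  apply: eq_measure_integral.
  exact: measurable_rot_cb.
  move=> ? S mS _ /=; by rewrite /pushforward (rs A oA S mS).
exists f2; split.
  split; first by move=> v u m; exact: f0.
  split; first by move=> v u; exact: f1.
  move=> v m; exact: (measurableT_comp (fm e0 m) (@measurable_rot_cb R d (2 ^ b) (HH e0 v))).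
split.
  apply: ereal_sup_le => _ [v sv <-]; exists e0 => //.
  by rewrite key.
move=> v v'; rewrite !inE => sv sv'.
by rewrite !key.
Qed.
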